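(* Consider the farthest-point-insertion procedure on a metric space $(\mathcal{M},\delta)$ with integer $k\ge 2$ (less than $|\mathcal{M}|$ if $\mathcal{M}$ is finite): choose $q_1,q_2\in\mathcal{M}$ with $\delta(q_1,q_2)=\operatorname{diam}(\mathcal{M})$, set $S_2=\{q_1,q_2\}$, and for $i=2,\dots,k-1$ let $q_{i+1}$ be any point of $\mathcal{M}$ maximizing $\delta(\cdot,S_i)$ and set $S_{i+1}=S_i\cup\{q_{i+1}\}$; output $S_k$. Let $\alpha=\inf\{GR_P:P\subset\mathcal{M},|P|=k\}$. Then $GR_{S_k}\le\rho\,\alpha$ with: (i) $\rho=2$ when $\mathcal{M}$ is continuous, compact and path connected; (ii) $\rho=\rho(k)=\dfrac{\sqrt[4]{27}\sqrt{k}}{\sqrt[4]{3}\sqrt{k}-\sqrt{2}}=\sqrt3+O(1/\sqrt{k})$ when $\mathcal{M}=[0,1]^2$ with the Euclidean metric; (iii) $\rho=3$ when $\mathcal{M}$ is the vertex set of a connected undirected graph with the shortest-path metric.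
   Context: For a metric space $(\mathcal{M},\delta)$ and a finite nonempty set $S\subset\mathcal{M}$, $\delta(x,S)=\min_{s\in S}\delta(x,s)$ and $R_S=\sup_{x\in\mathcal{M}}\delta(x,S)$; if $|S|\ge2$, $r_S=\min_{p,q\in S,\,p\ne q}\delta(p,q)/2$ and the gap ratio is $GR_S=R_S/r_S$. In the graph metric, $\delta(u,v)$ is the number of edges on a shortest $u$–$v$ path. *)

(* Defs.v *)
From Stdlib Require Import Reals List.
From Coquelicot Require Import Coquelicot.
Open Scope R_scope.

Section MetricDefs.
Context {T : Type} (d : T -> T -> R).

Definition is_metric : Prop :=
  (forall x y, 0 <= d x y) /\
  (forall x y, d x y = 0 <-> x = y) /\
  (forall x y, d x y = d y x) /\
  (forall x y z, d x z <= d x y + d y z).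

Fixpoint dist_set (x : T) (S : list T) : R :=
  match S with
  | nil => 0
  | s :: nil => d x s
  | s :: S' => Rmin (d x s) (dist_set x S')
  end.

Definition covering_radius (S : list T) : Rbar :=
  Rbar_lub (fun r : Rbar => exists x, r = Finite (dist_set x S)).

Definition packing_radius (S : list T) : Rbar :=
  Rbar_glb (fun r : Rbar => exists p q, In p S /\ In q S /\ p <> q /\
                                       r = Finite (d p q / 2)).

Definition gap_ratio (S : list T) : Rbar :=
  Rbar_div (covering_radius S) (packing_radius S).

Definition opt_gap_ratio (k : nat) : Rbar :=
  Rbar_glb (fun r : Rbar => exists P : list T,
              NoDup P /\ length P = k /\ r = gap_ratio P).

Definition prefix_set (q : nat -> T) (i : nat) : list T := map q (seq 1 i).

Definition farthest_insertion (k : nat) (q : nat -> T) : Prop :=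
  (forall x y, d x y <= d (q 1%nat) (q 2%nat)) /\
  (forall i, (2 <= i)%nat -> (i <= k - 1)%nat ->
     forall x, dist_set x (prefix_set q i) <= dist_set (q (S i)) (prefix_set q i)).


Definition open_set (U : T -> Prop) : Prop :=
  forall x, U x -> exists e, 0 < e /\ forall y, d x y < e -> U y.

Definition compact_space : Prop :=
  forall (I : Type) (U : I -> T -> Prop),
    (forall i, open_set (U i)) -> (forall x, exists i, U i x) ->
    exists l : list I, forall x, exists i, In i l /\ U i x.

Definition path_connected_space : Prop :=
  forall x y : T, exists gamma : R -> T,
    gamma 0 = x /\ gamma 1 = y /\
    forall t, 0 <= t <= 1 -> forall eps, 0 < eps -> exists del, 0 < del /\
      forall s, 0 <= s <= 1 -> Rabs (s - t) < del -> d (gamma s) (gamma t) < eps.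

End MetricDefs.

Definition lt_card_if_finite (T : Type) (k : nat) : Prop :=
  forall l : list T, NoDup l -> (forall x, In x l) -> (k < length l)%nat.

Definition unit_square : Type :=
  { p : R * R | 0 <= fst p <= 1 /\ 0 <= snd p <= 1 }.

Definition euclid_sq (p q : unit_square) : R :=
  sqrt ((fst (proj1_sig p) - fst (proj1_sig q)) ^ 2 +
        (snd (proj1_sig p) - snd (proj1_sig q)) ^ 2).

Definition rho_square (k : nat) : R :=
  sqrt (sqrt 27) * sqrt (INR k) / (sqrt (sqrt 3) * sqrt (INR k) - sqrt 2).

Inductive walk {V : Type} (adj : V -> V -> Prop) : nat -> V -> V -> Prop :=
  | walk_nil : forall v, walk adj 0 v v
  | walk_cons : forall n u w v, adj u w -> walk adj n w v -> walk adj (S n) u v.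

Definition finite_simple_graph {V : Type} (adj : V -> V -> Prop) : Prop :=
  (exists l : list V, forall v, In v l) /\
  (forall u v, adj u v -> adj v u) /\
  (forall v, ~ adj v v).

Definition connected_graph {V : Type} (adj : V -> V -> Prop) : Prop :=
  forall u v, exists n, walk adj n u v.

Definition shortest_path_metric {V : Type} (adj : V -> V -> Prop)
  (d : V -> V -> R) : Prop :=
  forall u v, exists n, walk adj n u v /\ (forall m, walk adj m u v -> (n <= m)%nat)
                        /\ d u v = INR n.

(* Main.v *)
Require Import Defs.
From Stdlib Require Import Reals List Lra Lia Psatz FinFun Classical ProofIrrelevance.
From Coquelicot Require Import Coquelicot.
Open Scope R_scope.

Lemma lub_c (E : Rbar -> Prop) : Rbar_is_lub E (Rbar_lub E).
Proof. exact (proj2_sig (Rbar_ex_lub E)). Qed.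
Lemma glb_c (E : Rbar -> Prop) : Rbar_is_glb E (Rbar_glb E).
Proof. exact (proj2_sig (Rbar_ex_glb E)). Qed.

Section Gen.
Context {T : Type} (d : T -> T -> R).

Lemma dist_set_le x l s : In s l -> dist_set d x l <= d x s.
Proof.
  induction l as [|a l IH]; [intros []|].
  destruct l as [|b l'].
  - intros [<-|[]]. simpl. lra.
  - intros H. change (dist_set d x (a :: b :: l')) with (Rmin (d x a) (dist_set d x (b :: l'))).
    destruct H as [<-|H]; [apply Rmin_l|]. eapply Rle_trans; [apply Rmin_r| now apply IH].
Qed.

Lemma dist_set_attained x l : l <> nil -> exists s, In s l /\ dist_set d x l = d x s.
Proof.
  induction l as [|a l IH]; [congruence|]. intros _.
  destruct l as [|b l'].
  - exists a. simpl. auto.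
  - change (dist_set d x (a :: b :: l')) with (Rmin (d x a) (dist_set d x (b :: l'))).
    destruct IH as [s [Hs Hd]]; [congruence|].
    unfold Rmin. destruct (Rle_dec (d x a) (dist_set d x (b :: l'))).
    + exists a; simpl; auto.
    + exists s; split; [right; exact Hs| exact Hd].
Qed.

Lemma dist_set_ge x l r : l <> nil -> (forall s, In s l -> r <= d x s) -> r <= dist_set d x l.
Proof. intros Hl H. destruct (dist_set_attained x l Hl) as [s [Hs ->]]. auto. Qed.

Lemma dist_set_mono x l l' : l <> nil -> incl l l' -> dist_set d x l' <= dist_set d x l.
Proof. intros Hl Hi. destruct (dist_set_attained x l Hl) as [s [Hs ->]]. apply dist_set_le; auto. Qed.

Lemma cov_ge x S : Rbar_le (Finite (dist_set d x S)) (covering_radius d S).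
Proof.
  unfold covering_radius. destruct (lub_c (fun r : Rbar => exists x, r = Finite (dist_set d x S))) as [Hu _].
  apply Hu. exists x. reflexivity.
Qed.

Lemma cov_le S B : (forall x, dist_set d x S <= B) -> Rbar_le (covering_radius d S) (Finite B).
Proof.
  intros H. unfold covering_radius. destruct (lub_c (fun r : Rbar => exists x, r = Finite (dist_set d x S))) as [_ Hl].
  apply Hl. intros r [x ->]. simpl. auto.
Qed.

Lemma pack_le S p q : In p S -> In q S -> p <> q -> Rbar_le (packing_radius d S) (Finite (d p q / 2)).
Proof.
  intros. unfold packing_radius. destruct (glb_c (fun r : Rbar => exists p q, In p S /\ In q S /\ p <> q /\ r = Finite (d p q / 2))) as [Hu _].
  apply Hu. exists p, q. auto.
Qed.

Lemma pack_ge S B : (forall p q, In p S -> In q S -> p <> q -> B <= d p q / 2) ->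
  Rbar_le (Finite B) (packing_radius d S).
Proof.
  intros H. unfold packing_radius. destruct (glb_c (fun r : Rbar => exists p q, In p S /\ In q S /\ p <> q /\ r = Finite (d p q / 2))) as [_ Hl].
  apply Hl. intros r (p & q & Hp & Hq & Hpq & ->). simpl. auto.
Qed.

Lemma dedup_ex (l : list T) : exists l', NoDup l' /\ (forall x, In x l' <-> In x l) /\ (length l' <= length l)%nat.
Proof.
  induction l as [|a l IH].
  - exists nil. repeat split; auto using NoDup_nil.
  - destruct IH as [l' [H1 [H2 H3]]].
    destruct (classic (In a l')) as [Ha|Ha].
    + exists l'. repeat split; auto. intros Hx. right. now apply H2.
      intros [<-|Hx]; [auto|now apply H2]. simpl. lia.
    + exists (a :: l'). repeat split. constructor; auto.
      intros [<-|Hx]; [left; auto| right; now apply H2].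
      intros [<-|Hx]; [left; auto| right; now apply H2]. simpl. lia.
Qed.

Lemma card_contra k (l : list T) : lt_card_if_finite T k -> (forall x, In x l) -> (length l <= k)%nat -> False.
Proof.
  intros Hc Hl Hlen. destruct (dedup_ex l) as [l' [H1 [H2 H3]]].
  assert (k < length l')%nat by (apply Hc; auto; intros; apply H2; auto). lia.
Qed.

End Gen.

Section FI.
Context {T : Type} (d : T -> T -> R).
Hypothesis Hsym : forall x y, d x y = d y x.
Hypothesis Hnn : forall x y, 0 <= d x y.
Hypothesis Hdiag : forall x, d x x = 0.
Hypothesis Hsep : forall x y, d x y = 0 -> x = y.

Lemma in_prefix (q : nat -> T) i j : (1 <= j <= i)%nat -> In (q j) (prefix_set q i).
Proof. intros H. unfold prefix_set. apply in_map. apply in_seq. lia. Qed.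

Lemma prefix_in (q : nat -> T) i x : In x (prefix_set q i) -> exists j, (1 <= j <= i)%nat /\ x = q j.
Proof. unfold prefix_set. intros H. apply in_map_iff in H. destruct H as [j [<- H]]. apply in_seq in H. exists j. split; [lia|auto]. Qed.

Lemma prefix_incl (q : nat -> T) i j : (i <= j)%nat -> incl (prefix_set q i) (prefix_set q j).
Proof. intros H x Hx. destruct (prefix_in q i x Hx) as [m [Hm ->]]. apply in_prefix. lia. Qed.

Lemma prefix_nonnil (q : nat -> T) i : (1 <= i)%nat -> prefix_set q i <> nil.
Proof. intros H E. assert (In (q 1%nat) (prefix_set q i)) by (apply in_prefix; lia). rewrite E in H0. auto. Qed.

Lemma prefix_len (q : nat -> T) i : length (prefix_set q i) = i.
Proof. unfold prefix_set. rewrite length_map, length_seq. auto. Qed.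

Lemma fi_D k q : (2 <= k)%nat -> lt_card_if_finite T k -> farthest_insertion d k q ->
  exists D, 0 < D /\ (forall x, dist_set d x (prefix_set q k) <= D) /\
     (forall i j, (1 <= i <= k)%nat -> (1 <= j <= k)%nat -> i <> j -> D <= d (q i) (q j)).
Proof.
  intros Hk Hc [Hdiam HF].
  assert (Hmain : exists D, 0 <= D /\ (forall x, dist_set d x (prefix_set q k) <= D) /\
     (forall i j, (1 <= i <= k)%nat -> (1 <= j <= k)%nat -> (i < j)%nat -> D <= d (q j) (q i)) /\
     (D = 0 -> forall x, In x (prefix_set q (k-1)))).
  { destruct (Nat.eq_dec k 2) as [->|Hk3].
    - exists (d (q 1%nat) (q 2%nat)). repeat split; auto.
      + intros x. eapply Rle_trans; [apply dist_set_le, in_prefix with (j:=1%nat); lia| apply Hdiam].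
      + intros i j Hi Hj Hij. assert (i = 1 /\ j = 2)%nat as [-> ->] by lia. rewrite Hsym. lra.
      + intros H0 x. assert (x = q 1%nat). { apply Hsep. apply Rle_antisym; [|auto]. rewrite <- H0. apply Hdiam. }
        subst. apply in_prefix. lia.
    - set (D := dist_set d (q k) (prefix_set q (k-1))).
      assert (HD : forall x, dist_set d x (prefix_set q (k-1)) <= D).
      { intros x. unfold D. pose proof (HF (k-1)%nat ltac:(lia) ltac:(lia) x) as H. replace (S (k-1)) with k in H by lia. exact H. }
      exists D. repeat split.
      + destruct (dist_set_attained d (q k) (prefix_set q (k-1))) as [s [_ Hs]].
        apply prefix_nonnil; lia. unfold D; rewrite Hs; auto.
      + intros x. eapply Rle_trans; [|apply (HD x)]. apply dist_set_mono.
        apply prefix_nonnil; lia. apply prefix_incl; lia.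
      + intros i j Hi Hj Hij. destruct (Nat.eq_dec j 2) as [->|Hj2].
        * assert (i = 1%nat) as -> by lia. rewrite Hsym. eapply Rle_trans; [|apply Hdiam].
          unfold D. eapply Rle_trans; [apply dist_set_le, in_prefix with (j:=1%nat); lia|].
          rewrite Hsym. apply Hdiam.
        * eapply Rle_trans with (dist_set d (q k) (prefix_set q (j-1))).
          { unfold D. apply dist_set_mono. apply prefix_nonnil; lia. apply prefix_incl; lia. }
          eapply Rle_trans with (dist_set d (q j) (prefix_set q (j-1))).
          { pose proof (HF (j-1)%nat ltac:(lia) ltac:(lia) (q k)) as H. replace (S (j-1)) with j in H by lia. exact H. }
          apply dist_set_le, in_prefix. lia.
      + intros H0 x. destruct (dist_set_attained d x (prefix_set q (k-1))) as [s [Hs Hds]].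
        apply prefix_nonnil; lia.
        assert (x = s). { apply Hsep. rewrite <- Hds. apply Rle_antisym; [rewrite <- H0; auto|].
          rewrite Hds; auto. }
        subst; auto. }
  destruct Hmain as [D [H0 [H1 [H2 H3]]]].
  exists D. repeat split; auto.
  - destruct H0 as [H0|H0]; auto. exfalso.
    apply (card_contra k (prefix_set q (k-1)) Hc); [apply H3; auto|]. rewrite prefix_len. lia.
  - intros i j Hi Hj Hij. destruct (Nat.lt_total i j) as [Hl|[Hl|Hl]].
    + rewrite Hsym. auto.
    + contradiction.
    + auto.
Qed.

Lemma fi_gap k q : (2 <= k)%nat -> lt_card_if_finite T k -> farthest_insertion d k q ->
  Rbar_le (gap_ratio d (prefix_set q k)) (Finite 2).
Proof.
  intros Hk Hc HF. destruct (fi_D k q Hk Hc HF) as [D [HD0 [HD1 HD2]]].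
  set (S := prefix_set q k).
  assert (Hne : q 1%nat <> q 2%nat).
  { intros E. assert (D <= d (q 1%nat) (q 2%nat)) by (apply HD2; lia). rewrite E, Hdiag in H. lra. }
  assert (Hp1 : Rbar_le (Finite (D/2)) (packing_radius d S)).
  { apply pack_ge. intros p r Hp Hr Hpr. destruct (prefix_in q k p Hp) as [i [Hi ->]].
    destruct (prefix_in q k r Hr) as [j [Hj ->]]. assert (i <> j) by (intros ->; auto).
    assert (D <= d (q i) (q j)) by auto. lra. }
  assert (Hp2 := pack_le d S (q 1%nat) (q 2%nat) ltac:(apply in_prefix; lia) ltac:(apply in_prefix; lia) Hne).
  assert (Hc1 := cov_le d S D HD1).
  assert (Hc2 := cov_ge d (q 1%nat) S).
  unfold gap_ratio. fold S in Hp1, Hp2, Hc1, Hc2 |- *.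
  destruct (covering_radius d S) as [c| |]; simpl in Hc1, Hc2; try contradiction.
  destruct (packing_radius d S) as [p| |]; simpl in Hp1, Hp2; try contradiction.
  simpl. apply Rle_trans with (D * / p).
  - apply Rmult_le_compat_r; auto. left; apply Rinv_0_lt_compat; lra.
  - apply Rmult_le_reg_r with p; [lra|]. rewrite Rmult_assoc, Rinv_l by lra. lra.
Qed.
End FI.

Lemma Rbar_mult_pinf r : 0 < r -> Rbar_mult (Finite r) p_infty = p_infty.
Proof. intros H. simpl. destruct (Rle_dec 0 r) as [h|h]; [|lra]. destruct (Rle_lt_or_eq_dec 0 r h); [auto|lra]. Qed.
Lemma Rbar_mult_pinf' r : 0 < r -> Rbar_mult p_infty (Finite r) = p_infty.
Proof. intros H. simpl. destruct (Rle_dec 0 r) as [h|h]; [|lra]. destruct (Rle_lt_or_eq_dec 0 r h); [auto|lra]. Qed.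

Lemma combine {T : Type} (d : T -> T -> R) k S L rho :
  Rbar_le (gap_ratio d S) (Finite 2) ->
  (forall P, NoDup P -> length P = k -> Rbar_le (Finite L) (gap_ratio d P)) ->
  0 < rho -> 2 <= rho * L ->
  Rbar_le (gap_ratio d S) (Rbar_mult (Finite rho) (opt_gap_ratio d k)).
Proof.
  intros H1 H2 Hr HL.
  assert (Ho : Rbar_le (Finite L) (opt_gap_ratio d k)).
  { unfold opt_gap_ratio. destruct (glb_c (fun r : Rbar => exists P : list T, NoDup P /\ length P = k /\ r = gap_ratio d P)) as [_ Hl].
    apply Hl. intros r (P & HP & Hk & ->). auto. }
  destruct (opt_gap_ratio d k) as [a| |]; simpl in Ho; try contradiction.
  - simpl. eapply Rbar_le_trans; [exact H1|]. simpl. apply Rle_trans with (rho * L); auto.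
    apply Rmult_le_compat_l; lra.
  - rewrite Rbar_mult_pinf by auto. destruct (gap_ratio d S); simpl; auto.
Qed.

Lemma list_min (Lr : list R) : forall (E : R -> Prop), (forall r, E r -> In r Lr) -> (exists r, E r) ->
  exists m, E m /\ forall r, E r -> m <= r.
Proof.
  induction Lr as [|a Lr IH]; intros E HE [r Hr].
  - destruct (HE r Hr).
  - destruct (classic (exists r, E r /\ In r Lr)) as [Hx|Hx].
    + destruct (IH (fun r => E r /\ In r Lr)) as [m [[Hm1 Hm2] Hm3]]; [tauto|destruct Hx as [r' Hr']; eauto|].
      destruct (classic (E a /\ a < m)) as [Ha|Ha].
      * exists a. split; [tauto|]. intros r0 Hr0. destruct (HE r0 Hr0) as [<-|Hin]; [lra|].
        assert (m <= r0) by auto. lra.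
      * exists m. split; auto. intros r0 Hr0. destruct (HE r0 Hr0) as [Heq|Hin]; [|auto].
        subst r0. destruct (Rle_dec m a); auto. exfalso; apply Ha; split; auto; lra.
    + exists a. assert (Ea : E a).
      { destruct (HE r Hr) as [<-|Hin]; auto. exfalso; apply Hx; eauto. }
      split; auto. intros r0 Hr0. destruct (HE r0 Hr0) as [<-|Hin]; [lra|].
      exfalso; apply Hx; eauto.
Qed.

Section LB.
Context {T : Type} (d : T -> T -> R).
Hypothesis Hsym : forall x y, d x y = d y x.
Hypothesis Hnn : forall x y, 0 <= d x y.
Hypothesis Hdiag : forall x, d x x = 0.
Hypothesis Hsep : forall x y, d x y = 0 -> x = y.

Lemma min_pair (P : list T) : NoDup P -> (2 <= length P)%nat ->
  exists a b, In a P /\ In b P /\ a <> b /\ forall p q, In p P -> In q P -> p <> q -> d a b <= d p q.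
Proof.
  intros HP Hl.
  destruct (list_min (map (fun pr => d (fst pr) (snd pr)) (list_prod P P))
     (fun r => exists p q, In p P /\ In q P /\ p <> q /\ r = d p q)) as [m [(a & b & Ha & Hb & Hab & ->) Hm]].
  - intros r (p & q & Hp & Hq & _ & ->). apply (in_map (fun pr => d (fst pr) (snd pr)) _ (p, q)).
    apply in_prod; auto.
  - destruct P as [|a [|b P']]; simpl in Hl; try lia. inversion HP; subst.
    exists (d a b), a, b. repeat split; simpl; auto. intros ->. apply H1; simpl; auto.
  - exists a, b. repeat split; auto. intros p q Hp Hq Hpq. apply Hm. exists p, q. auto.
Qed.

Lemma lb_gap (P : list T) L : NoDup P -> (2 <= length P)%nat ->
  (forall a b, In a P -> In b P -> a <> b -> (forall p q, In p P -> In q P -> p <> q -> d a b <= d p q) ->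
     exists x, L * (d a b / 2) <= dist_set d x P) ->
  Rbar_le (Finite L) (gap_ratio d P).
Proof.
  intros HP Hl H. destruct (min_pair P HP Hl) as (a & b & Ha & Hb & Hab & Hm).
  destruct (H a b Ha Hb Hab Hm) as [x Hx].
  assert (Hpos : 0 < d a b). { destruct (Hnn a b) as [h|h]; auto. exfalso. apply Hab, Hsep; auto. }
  assert (Hp1 : Rbar_le (Finite (d a b / 2)) (packing_radius d P)).
  { apply pack_ge. intros p q Hp Hq Hpq. assert (d a b <= d p q) by auto. lra. }
  assert (Hp2 := pack_le d P a b Ha Hb Hab).
  assert (Hc := cov_ge d x P).
  unfold gap_ratio.
  destruct (packing_radius d P) as [p| |]; simpl in Hp1, Hp2; try contradiction.
  assert (p = d a b / 2) as -> by lra.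
  destruct (covering_radius d P) as [c| |]; simpl in Hc; try contradiction.
  - simpl. apply Rmult_le_reg_r with (d a b / 2); [lra|]. rewrite Rmult_assoc, Rinv_l by lra. lra.
  - unfold Rbar_div. simpl Rbar_inv. rewrite Rbar_mult_pinf'. simpl; auto. apply Rinv_0_lt_compat; lra.
Qed.
End LB.

Definition clamp t := Rmax 0 (Rmin 1 t).
Lemma clamp_in t : 0 <= clamp t <= 1.
Proof. unfold clamp, Rmax, Rmin. repeat destruct Rle_dec; lra. Qed.
Lemma clamp_lip x y : Rabs (clamp x - clamp y) <= Rabs (x - y).
Proof. unfold clamp, Rmax, Rmin. repeat destruct Rle_dec; unfold Rabs; repeat destruct Rcase_abs; lra. Qed.
Lemma clamp_id t : 0 <= t <= 1 -> clamp t = t.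
Proof. unfold clamp, Rmax, Rmin. repeat destruct Rle_dec; lra. Qed.

Lemma part1_lb (T : Type) (d : T -> T -> R) : is_metric d -> path_connected_space d ->
  forall P : list T, NoDup P -> (2 <= length P)%nat -> Rbar_le (Finite 1) (gap_ratio d P).
Proof.
  intros [Hnn [Hsep [Hsym Htri]]] Hpc P HP Hl.
  assert (Hdiag : forall x, d x x = 0) by (intros; apply Hsep; auto).
  apply (lb_gap d Hnn Hdiag (fun x y h => proj1 (Hsep x y) h)); auto.
  intros a b Ha Hb Hab Hm.
  assert (Hpos : 0 < d a b). { destruct (Hnn a b) as [h|h]; auto. exfalso. apply Hab, Hsep; auto. }
  destruct (Hpc a b) as [g [Hg0 [Hg1 Hgc]]].
  set (f := fun t => d (g (clamp t)) a - d a b / 2).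
  assert (Hcont : continuity f).
  { intros t0. unfold continuity_pt, continue_in, limit1_in, limit_in. simpl. unfold R_dist.
    intros eps Heps. destruct (Hgc (clamp t0) (clamp_in t0) eps Heps) as [del [Hdel Hd]].
    exists del. split; auto. intros t [_ Ht]. unfold f.
    assert (H1 : d (g (clamp t)) (g (clamp t0)) < eps).
    { apply Hd. apply clamp_in. eapply Rle_lt_trans; [apply clamp_lip|exact Ht]. }
    pose proof (Htri (g (clamp t)) (g (clamp t0)) a).
    pose proof (Htri (g (clamp t0)) (g (clamp t)) a).
    rewrite (Hsym (g (clamp t0)) (g (clamp t))) in H0.
    unfold Rabs. destruct Rcase_abs; lra. }
  destruct (IVT f 0 1 Hcont ltac:(lra)) as [z [Hz Hfz]].
  - unfold f. rewrite clamp_id by lra. rewrite Hg0, Hdiag. lra.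
  - unfold f. rewrite clamp_id by lra. rewrite Hg1, Hsym. lra.
  - exists (g (clamp z)). rewrite Rmult_1_l. apply dist_set_ge.
    { intros E; rewrite E in Ha; destruct Ha. }
    intros s Hs. unfold f in Hfz. destruct (classic (s = a)) as [->|Hsa]; [lra|].
    assert (d a b <= d a s) by auto.
    pose proof (Htri a (g (clamp z)) s). rewrite (Hsym a (g (clamp z))) in H0. lra.
Qed.

Definition X (p : unit_square) := fst (proj1_sig p).
Definition Y (p : unit_square) := snd (proj1_sig p).
Definition mkpt (x y : R) (H : 0 <= fst (x,y) <= 1 /\ 0 <= snd (x,y) <= 1) : unit_square := exist _ (x,y) H.

Lemma X_in p : 0 <= X p <= 1.  Proof. destruct p as [[x y] H]. unfold X; simpl in *. tauto. Qed.
Lemma Y_in p : 0 <= Y p <= 1.  Proof. destruct p as [[x y] H]. unfold Y; simpl in *. tauto. Qed.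

Lemma E_nn p q : 0 <= euclid_sq p q.
Proof. apply sqrt_pos. Qed.

Lemma E_sq p q : euclid_sq p q * euclid_sq p q = (X p - X q)*(X p - X q) + (Y p - Y q)*(Y p - Y q).
Proof.
  unfold euclid_sq. rewrite sqrt_sqrt. unfold X, Y; ring.
  apply Rplus_le_le_0_compat; apply pow2_ge_0.
Qed.

Lemma sq_ge a t : 0 <= a -> 0 <= t -> t*t <= a*a -> t <= a.
Proof. intros. destruct (Rle_lt_dec t a); auto. exfalso. assert (a*a < t*t) by (apply Rmult_le_0_lt_compat; lra). lra. Qed.
Lemma sq_lt a t : 0 <= a -> a < t -> a*a < t*t.
Proof. intros. apply Rmult_le_0_lt_compat; lra. Qed.
Lemma sq_le a t : 0 <= a -> a <= t -> a*a <= t*t.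
Proof. intros. apply Rmult_le_compat; lra. Qed.

Lemma E_sym p q : euclid_sq p q = euclid_sq q p.
Proof. unfold euclid_sq. f_equal. ring. Qed.

Lemma E_diag p : euclid_sq p p = 0.
Proof. unfold euclid_sq. replace (_ + _) with 0 by ring. apply sqrt_0. Qed.

Lemma E_sep p q : euclid_sq p q = 0 -> p = q.
Proof.
  intros H. pose proof (E_sq p q) as Hs. rewrite H in Hs.
  assert (h1 : 0 <= (X p - X q)*(X p - X q)) by apply Rle_0_sqr.
  assert (h2 : 0 <= (Y p - Y q)*(Y p - Y q)) by apply Rle_0_sqr.
  assert (e1 : (X p - X q)*(X p - X q) = 0) by lra.
  assert (e2 : (Y p - Y q)*(Y p - Y q) = 0) by lra.
  apply Rmult_integral in e1. apply Rmult_integral in e2.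
  assert (X p = X q) by lra. assert (Y p = Y q) by lra.
  destruct p as [[x y] hp], q as [[x' y'] hq]. unfold X, Y in *; simpl in *. subst.
  f_equal. apply proof_irrelevance.
Qed.

Lemma sq_card k : lt_card_if_finite unit_square k.
Proof.
  intros l Hl Hall.
  assert (Hf : forall n : nat, 0 <= fst (/ (INR n + 1), 0) <= 1 /\ 0 <= snd (/ (INR n + 1), 0) <= 1).
  { intros n. simpl. pose proof (pos_INR n). split; [|lra]. split.
    - left. apply Rinv_0_lt_compat. lra.
    - rewrite <- Rinv_1. apply Rinv_le_contravar; lra. }
  set (f := fun n => mkpt _ _ (Hf n)).
  assert (Hinj : Injective f).
  { intros n m H. apply (f_equal X) in H. unfold f, X, mkpt in H. simpl in H.
    pose proof (pos_INR n). pose proof (pos_INR m).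
    apply Rinv_eq_reg in H. apply INR_eq. lra. }
  assert (HN := Injective_map_NoDup Hinj (seq_NoDup (S k) 0)).
  pose proof (NoDup_incl_length HN (fun x _ => Hall x)).
  rewrite length_map, length_seq in H. lia.
Qed.

Lemma sq_lb1 (P : list unit_square) : NoDup P -> (2 <= length P)%nat -> Rbar_le (Finite 1) (gap_ratio euclid_sq P).
Proof.
  intros HP Hl. apply (lb_gap euclid_sq E_nn E_diag E_sep); auto.
  intros a b Ha Hb Hab Hm.
  assert (Hmid : 0 <= fst ((X a + X b)/2, (Y a + Y b)/2) <= 1 /\ 0 <= snd ((X a + X b)/2, (Y a + Y b)/2) <= 1).
  { simpl. pose proof (X_in a). pose proof (X_in b). pose proof (Y_in a). pose proof (Y_in b). lra. }
  set (c := mkpt _ _ Hmid).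
  assert (Hid : forall s, euclid_sq c s * euclid_sq c s =
     (euclid_sq a s * euclid_sq a s + euclid_sq b s * euclid_sq b s)/2 - euclid_sq a b * euclid_sq a b / 4).
  { intros s. rewrite !E_sq. unfold c, mkpt, X, Y; simpl. field. }
  exists c. rewrite Rmult_1_l. apply dist_set_ge. { intros E; rewrite E in Ha; destruct Ha. }
  intros s Hs. apply sq_ge; [apply E_nn| pose proof (E_nn a b); lra|].
  rewrite Hid.
  assert (euclid_sq a b * euclid_sq a b <= euclid_sq a s * euclid_sq a s + euclid_sq b s * euclid_sq b s).
  { destruct (classic (s = a)) as [->|Hsa].
    - rewrite (E_sym b a). pose proof (Rle_0_sqr (euclid_sq a a)). unfold Rsqr in H. lra.
    - destruct (classic (s = b)) as [->|Hsb].
      + pose proof (Rle_0_sqr (euclid_sq b b)). unfold Rsqr in H. lra.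
      + assert (euclid_sq a b <= euclid_sq a s) by auto.
        pose proof (sq_le _ _ (E_nn a b) H). pose proof (Rle_0_sqr (euclid_sq b s)). unfold Rsqr in H1. lra. }
  lra.
Qed.

Lemma cont_gen (f : R -> R) : (forall x, ex_derive f x) -> continuity f.
Proof. intros H x. apply continuity_pt_filterlim. apply (@ex_derive_continuous R_AbsRing R_NormedModule f). auto. Qed.

Lemma alg (A1 A2 B1 B2 C1 C2 t s : R): 0 < t -> 0 < s -> s < t -> s*s = C1*C1+C2*C2 ->
  A1*A1+A2*A2 = t*t -> B1*B1+B2*B2 = t*t ->
  (A1-B1)*(A1-B1)+(A2-B2)*(A2-B2) >= 3*(t*t) ->
  (A1-C1)*(A1-C1)+(A2-C2)*(A2-C2) >= 3*(t*t) ->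
  (B1-C1)*(B1-C1)+(B2-C2)*(B2-C2) >= 3*(t*t) -> False.
Proof.
  intros Ht Hs Hst HC HA HB H1 H2 H3.
  set (u := A1*B1+A2*B2). set (v := A1*C1+A2*C2). set (w := B1*C1+B2*C2).
  assert (Hu : u <= - (t*t)/2) by (unfold u; nra).
  assert (Hv : v <= (s*s - 2*(t*t))/2) by (unfold v; nra).
  assert (Hw : w <= (s*s - 2*(t*t))/2) by (unfold w; nra).
  assert (H0 : 0 <= (s*(A1+B1)+t*C1)*(s*(A1+B1)+t*C1) + (s*(A2+B2)+t*C2)*(s*(A2+B2)+t*C2)) by (apply Rplus_le_le_0_compat; apply Rle_0_sqr).
  assert (E : (s*(A1+B1)+t*C1)*(s*(A1+B1)+t*C1) + (s*(A2+B2)+t*C2)*(s*(A2+B2)+t*C2)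
     = s*s*((A1*A1+A2*A2)+(B1*B1+B2*B2) + 2*u) + t*t*(C1*C1+C2*C2) + 2*(s*t)*(v+w)) by (unfold u, v, w; ring).
  rewrite HA, HB, <- HC in E.
  assert (Hsu : s*s*u <= s*s*(-(t*t)/2)) by (apply Rmult_le_compat_l; [apply Rle_0_sqr|lra]).
  assert (Hsv : (s*t)*(v+w) <= (s*t)*(s*s - 2*(t*t))) by (apply Rmult_le_compat_l; [apply Rmult_le_pos; lra|lra]).
  assert (Hneg : s*t*(s-t)*(s+2*t) < 0).
  { assert (0 < s*t) by (apply Rmult_lt_0_compat; lra).
    assert (0 < s*t*(t-s)*(s+2*t)) by (apply Rmult_lt_0_compat; [apply Rmult_lt_0_compat|]; lra).
    replace (s*t*(s-t)*(s+2*t)) with (-(s*t*(t-s)*(s+2*t))) by ring. lra. }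
  assert (E3 : s*s*(2*(t*t) + 2*u) + t*t*(s*s) + 2*(s*t)*(v+w) = 2*(s*s*u) + 2*((s*t)*(v+w)) + 3*(s*s*(t*t))) by ring.
  assert (E4 : s*t*(s-t)*(s+2*t) = (s*t)*(s*s-2*(t*t)) + s*s*(-(t*t)/2) + 3/2 *(s*s*(t*t))) by field.
  lra.
Qed.

Lemma local_lemma (P : list unit_square) (t : R) (a : unit_square) : 0 < t -> In a P ->
  t <= X a <= 1 - t -> t <= Y a <= 1 - t ->
  (forall p q, In p P -> In q P -> p <> q -> 3 * (t*t) <= euclid_sq p q * euclid_sq p q) ->
  exists x, t <= dist_set euclid_sq x P.
Proof.
  intros Ht Ha HXa HYa Hpair.
  destruct (classic (exists x, t <= dist_set euclid_sq x P)) as [H|Hall]; auto. exfalso.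
  assert (Hlt : forall x, exists s, In s P /\ euclid_sq x s < t).
  { intros x. destruct (dist_set_attained euclid_sq x P) as [s [Hs Hds]].
    { intros E; rewrite E in Ha; destruct Ha. }
    exists s. split; auto. rewrite <- Hds. destruct (Rlt_le_dec (dist_set euclid_sq x P) t); auto.
    exfalso; apply Hall; eauto. }
  assert (Hcp : forall th, 0 <= fst (X a + t * cos th, Y a + t * sin th) <= 1 /\ 0 <= snd (X a + t * cos th, Y a + t * sin th) <= 1).
  { intros th. simpl. pose proof (COS_bound th). pose proof (SIN_bound th).
    assert (t * cos th <= t * 1) by (apply Rmult_le_compat_l; lra).
    assert (t * (-1) <= t * cos th) by (apply Rmult_le_compat_l; lra).
    assert (t * sin th <= t * 1) by (apply Rmult_le_compat_l; lra).
    assert (t * (-1) <= t * sin th) by (apply Rmult_le_compat_l; lra). lra. }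
  set (cp := fun th => mkpt _ _ (Hcp th)).
  assert (Ecp : forall th s, euclid_sq (cp th) s * euclid_sq (cp th) s =
      (X a + t * cos th - X s) * (X a + t * cos th - X s) + (Y a + t * sin th - Y s) * (Y a + t * sin th - Y s)).
  { intros th s. rewrite E_sq. unfold cp, mkpt, X, Y. simpl. auto. }
  assert (Eca : forall th, euclid_sq (cp th) a * euclid_sq (cp th) a = t * t).
  { intros th. rewrite Ecp. pose proof (sin2_cos2 th). unfold Rsqr in H.
    replace (t*t) with (t*t*(sin th * sin th + cos th * cos th)) by (rewrite H; ring). ring. }
  destruct (Hlt (cp 0)) as [b [Hb Hb0]].
  assert (Hab : a <> b).
  { intros <-. pose proof (Eca 0). pose proof (sq_lt _ _ (E_nn _ _) Hb0). lra. }
  assert (Hab2 := Hpair a b Ha Hb Hab). rewrite E_sq in Hab2.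
  set (phi := fun th => (X a + t * cos th - X b) * (X a + t * cos th - X b) + (Y a + t * sin th - Y b) * (Y a + t * sin th - Y b) - t * t).
  assert (Hphi : continuity phi) by (apply cont_gen; intros x; unfold phi; auto_derive; auto).
  assert (Hth1 : exists th1, 0 < th1 /\ 0 < phi th1).
  { destruct (Rle_lt_dec 0 (Y b - Y a)) as [Hy|Hy].
    - exists (3 * (PI/2)). split. pose proof PI_RGT_0; lra.
      unfold phi. rewrite cos_3PI2, sin_3PI2.
      assert (0 <= t * (Y b - Y a)) by (apply Rmult_le_pos; lra).
      assert (0 < t*t) by (apply Rmult_lt_0_compat; lra). nra.
    - exists (PI/2). split. pose proof PI_RGT_0; lra.
      unfold phi. rewrite cos_PI2, sin_PI2.
      assert (0 <= t * (Y a - Y b)) by (apply Rmult_le_pos; lra).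
      assert (0 < t*t) by (apply Rmult_lt_0_compat; lra). nra. }
  destruct Hth1 as [th1 [Hth1 Hphi1]].
  assert (Hphi0 : phi 0 < 0).
  { unfold phi. rewrite <- (Ecp 0 b). pose proof (sq_lt _ _ (E_nn _ _) Hb0). lra. }
  destruct (IVT phi 0 th1 Hphi Hth1 Hphi0 Hphi1) as [th [_ Hth]].
  assert (Ecb : euclid_sq (cp th) b * euclid_sq (cp th) b = t * t).
  { rewrite Ecp. unfold phi in Hth. lra. }
  destruct (Hlt (cp th)) as [c [Hc Hc0]].
  pose proof (sq_lt _ _ (E_nn _ _) Hc0) as Hc1.
  assert (Hac : a <> c) by (intros <-; rewrite Eca in Hc1; lra).
  assert (Hbc : b <> c) by (intros <-; rewrite Ecb in Hc1; lra).
  assert (Hac2 := Hpair a c Ha Hc Hac). rewrite E_sq in Hac2.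
  assert (Hbc2 := Hpair b c Hb Hc Hbc). rewrite E_sq in Hbc2.
  set (s := euclid_sq (cp th) c).
  assert (Hs0 : 0 < s).
  { destruct (E_nn (cp th) c) as [h|h]; auto. exfalso.
    symmetry in h. apply E_sep in h. rewrite <- h in Hac2. rewrite <- E_sq, E_sym in Hac2.
    pose proof (Eca th). assert (0 < t*t) by (apply Rmult_lt_0_compat; lra). lra. }
  pose proof (Eca th) as HA. pose proof Ecb as HB. rewrite Ecp in HA, HB.
  assert (HC : s * s = (X c - X (cp th)) * (X c - X (cp th)) + (Y c - Y (cp th)) * (Y c - Y (cp th))).
  { unfold s. rewrite Ecp. unfold cp, mkpt, X, Y; simpl. ring. }
  assert (Hxcp : X (cp th) = X a + t * cos th) by reflexivity.
  assert (Hycp : Y (cp th) = Y a + t * sin th) by reflexivity.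
  rewrite Hxcp, Hycp in HC.
  apply (alg (X a - X (cp th)) (Y a - Y (cp th)) (X b - X (cp th)) (Y b - Y (cp th))
             (X c - X (cp th)) (Y c - Y (cp th)) t s); rewrite ?Hxcp, ?Hycp; auto.
  - unfold s; auto.
  - rewrite <- HA. ring.
  - rewrite <- HB. ring.
  - replace ((X a - (X a + t * cos th) - (X b - (X a + t * cos th))) * (X a - (X a + t * cos th) - (X b - (X a + t * cos th))) +
     (Y a - (Y a + t * sin th) - (Y b - (Y a + t * sin th))) * (Y a - (Y a + t * sin th) - (Y b - (Y a + t * sin th))))
     with ((X a - X b) * (X a - X b) + (Y a - Y b) * (Y a - Y b)) by ring. lra.
  - replace ((X a - (X a + t * cos th) - (X c - (X a + t * cos th))) * (X a - (X a + t * cos th) - (X c - (X a + t * cos th))) +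
     (Y a - (Y a + t * sin th) - (Y c - (Y a + t * sin th))) * (Y a - (Y a + t * sin th) - (Y c - (Y a + t * sin th))))
     with ((X a - X c) * (X a - X c) + (Y a - Y c) * (Y a - Y c)) by ring. lra.
  - replace ((X b - (X a + t * cos th) - (X c - (X a + t * cos th))) * (X b - (X a + t * cos th) - (X c - (X a + t * cos th))) +
     (Y b - (Y a + t * sin th) - (Y c - (Y a + t * sin th))) * (Y b - (Y a + t * sin th) - (Y c - (Y a + t * sin th))))
     with ((X b - X c) * (X b - X c) + (Y b - Y c) * (Y b - Y c)) by ring. lra.
Qed.

Definition cell (x : R) : nat :=
  if Rlt_dec x (1/4) then 0%nat else if Rlt_dec x (1/2) then 1%nat else if Rlt_dec x (3/4) then 2%nat else 3%nat.
Lemma cell_lt x : (cell x < 4)%nat.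
Proof. unfold cell. repeat destruct Rlt_dec; lia. Qed.
Lemma cell_close x y : 0 <= x <= 1 -> 0 <= y <= 1 -> cell x = cell y -> x - y <= 1/4 /\ y - x <= 1/4.
Proof. intros. unfold cell in H1. repeat destruct Rlt_dec; try discriminate; lra. Qed.
Definition cellP (p : unit_square) : nat := (4 * cell (X p) + cell (Y p))%nat.

Lemma pigeon {A B : Type} (f : A -> B) (l : list A) : NoDup l -> ~ NoDup (map f l) ->
  exists a b, In a l /\ In b l /\ a <> b /\ f a = f b.
Proof.
  induction l as [|x l IH]; intros Hl Hm.
  - exfalso. apply Hm. constructor.
  - inversion Hl; subst. simpl in Hm.
    destruct (classic (In (f x) (map f l))) as [Hin|Hnin].
    + apply in_map_iff in Hin. destruct Hin as [y [Hy Hyl]].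
      exists x, y. repeat split; simpl; auto. intros ->. contradiction.
    + destruct IH as [a [b (Ha & Hb & Hab & He)]]; auto.
      { intros Hn. apply Hm. constructor; auto. }
      exists a, b. simpl. auto.
Qed.

Lemma far_coord t u : 0 <= t <= 1/4 -> (u < t \/ 1 - t < u) -> (1/2 - t) * (1/2 - t) <= (1/2 - u) * (1/2 - u).
Proof.
  intros Ht [H|H].
  - apply sq_le; lra.
  - replace ((1/2 - u) * (1/2 - u)) with ((u - 1/2) * (u - 1/2)) by ring. apply sq_le; lra.
Qed.

Lemma sqrt3_sq : sqrt 3 * sqrt 3 = 3.
Proof. apply sqrt_sqrt. lra. Qed.
Lemma sqrt3_pos : 0 < sqrt 3.
Proof. apply sqrt_lt_R0. lra. Qed.

Lemma sq_lb2 (P : list unit_square) : NoDup P -> (17 <= length P)%nat ->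
  Rbar_le (Finite (2 / sqrt 3)) (gap_ratio euclid_sq P).
Proof.
  intros HP Hl. apply (lb_gap euclid_sq E_nn E_diag E_sep); [auto|lia|].
  intros a b Ha Hb Hab Hm.
  set (m := euclid_sq a b).
  assert (Hm0 : 0 < m). { destruct (E_nn a b) as [h|h]; auto. exfalso. apply Hab, E_sep; auto. }
  assert (Hm2 : m * m <= 1/8).
  { assert (Hnd : ~ NoDup (map cellP P)).
    { intros Hn. assert (incl (map cellP P) (seq 0 16)).
      { intros n Hn'. apply in_map_iff in Hn'. destruct Hn' as [p [<- _]]. apply in_seq.
        unfold cellP. pose proof (cell_lt (X p)). pose proof (cell_lt (Y p)). lia. }
      pose proof (NoDup_incl_length Hn H). rewrite length_map, length_seq in H0. lia. }
    destruct (pigeon cellP P HP Hnd) as [p [q (Hp & Hq & Hpq & He)]].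
    unfold cellP in He. pose proof (cell_lt (X p)). pose proof (cell_lt (Y p)).
    pose proof (cell_lt (X q)). pose proof (cell_lt (Y q)).
    assert (cell (X p) = cell (X q)) by lia. assert (cell (Y p) = cell (Y q)) by lia.
    destruct (cell_close _ _ (X_in p) (X_in q) H3). destruct (cell_close _ _ (Y_in p) (Y_in q) H4).
    assert (m <= euclid_sq p q) by (apply Hm; auto).
    pose proof (sq_le _ _ (Rlt_le _ _ Hm0) H9). rewrite E_sq in H10.
    assert ((X p - X q) * (X p - X q) <= 1/16).
    { destruct (Rle_dec 0 (X p - X q)). replace (1/16) with (1/4*(1/4)) by field. apply sq_le; lra.
      replace ((X p - X q) * (X p - X q)) with ((X q - X p) * (X q - X p)) by ring.
      replace (1/16) with (1/4*(1/4)) by field. apply sq_le; lra. }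
    assert ((Y p - Y q) * (Y p - Y q) <= 1/16).
    { destruct (Rle_dec 0 (Y p - Y q)). replace (1/16) with (1/4*(1/4)) by field. apply sq_le; lra.
      replace ((Y p - Y q) * (Y p - Y q)) with ((Y q - Y p) * (Y q - Y p)) by ring.
      replace (1/16) with (1/4*(1/4)) by field. apply sq_le; lra. }
    lra. }
  set (t := m / sqrt 3).
  pose proof sqrt3_pos. pose proof sqrt3_sq.
  assert (Ht0 : 0 < t) by (unfold t; apply Rdiv_lt_0_compat; lra).
  assert (Htt : 3 * (t * t) = m * m) by (unfold t; replace (3 * (m / sqrt 3 * (m / sqrt 3))) with (3 * (m*m) / (sqrt 3 * sqrt 3)) by (field; lra); rewrite H0; field).
  assert (Ht4 : t <= 1/4).
  { apply sq_ge; lra. }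
  replace (2 / sqrt 3 * (m / 2)) with t by (unfold t; field; lra).
  destruct (classic (exists a0, In a0 P /\ t <= X a0 <= 1 - t /\ t <= Y a0 <= 1 - t)) as [[a0 (Ha0 & Hx & Hy)]|Hno].
  - apply (local_lemma P t a0 Ht0 Ha0 Hx Hy). intros p q Hp Hq Hpq.
    assert (m <= euclid_sq p q) by (apply Hm; auto). pose proof (sq_le _ _ (Rlt_le _ _ Hm0) H1). lra.
  - assert (Hc : 0 <= fst (1/2, 1/2) <= 1 /\ 0 <= snd (1/2, 1/2) <= 1) by (simpl; lra).
    exists (mkpt _ _ Hc). apply dist_set_ge. { intros E; rewrite E in Ha; destruct Ha. }
    intros s Hs. apply sq_ge; [apply E_nn|lra|]. rewrite E_sq.
    change (X (mkpt _ _ Hc)) with (1/2). change (Y (mkpt _ _ Hc)) with (1/2).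
    assert (Hst : t * t <= (1/2 - t) * (1/2 - t)) by (apply sq_le; lra).
    pose proof (Rle_0_sqr (1/2 - X s)). pose proof (Rle_0_sqr (1/2 - Y s)). unfold Rsqr in *.
    destruct (classic (X s < t \/ 1 - t < X s)) as [Hx|Hx].
    + pose proof (far_coord t (X s) ltac:(lra) Hx). lra.
    + destruct (classic (Y s < t \/ 1 - t < Y s)) as [Hy|Hy].
      * pose proof (far_coord t (Y s) ltac:(lra) Hy). lra.
      * exfalso. apply Hno. exists s. split; auto. lra.
Qed.

Lemma rho_facts k : (2 <= k)%nat ->
  0 < rho_square k /\ 2 <= rho_square k * (2 / sqrt 3) /\ ((k <= 16)%nat -> 2 <= rho_square k * 1).
Proof.
  intros Hk.
  pose proof sqrt3_pos as H3p. pose proof sqrt3_sq as H3s.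
  set (s4 := sqrt (sqrt 3)). set (q := sqrt (INR k)). set (r2 := sqrt 2).
  assert (Hs4 : s4 * s4 = sqrt 3) by (apply sqrt_sqrt; lra).
  assert (Hs4p : 0 < s4) by (apply sqrt_lt_R0; lra).
  assert (Hk2 : 2 <= INR k) by (replace 2 with (INR 2) by (simpl; lra); apply le_INR; auto).
  assert (Hq : q * q = INR k) by (apply sqrt_sqrt; lra).
  assert (Hqp : 0 < q) by (apply sqrt_lt_R0; lra).
  assert (Hr2 : r2 * r2 = 2) by (apply sqrt_sqrt; lra).
  assert (Hr2p : 0 < r2) by (apply sqrt_lt_R0; lra).
  assert (H27 : sqrt (sqrt 27) = s4 * sqrt 3).
  { apply sqrt_lem_1. apply sqrt_pos. apply Rmult_le_pos; lra.
    replace ((s4 * sqrt 3) * (s4 * sqrt 3)) with ((s4 * s4) * (sqrt 3 * sqrt 3)) by ring.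
    rewrite Hs4, H3s. symmetry. apply sqrt_lem_1; try lra. }
  assert (Hs3gt1 : 1 < sqrt 3) by (rewrite <- sqrt_1; apply sqrt_lt_1; lra).
  assert (Hden : r2 < s4 * q).
  { destruct (Rlt_le_dec r2 (s4 * q)) as [h|h]; auto. exfalso.
    assert ((s4 * q) * (s4 * q) <= r2 * r2) by (apply sq_le; [apply Rmult_le_pos; lra|auto]).
    replace ((s4 * q) * (s4 * q)) with ((s4*s4)*(q*q)) in H by ring. rewrite Hs4, Hq, Hr2 in H.
    assert (sqrt 3 * 2 <= sqrt 3 * INR k) by (apply Rmult_le_compat_l; lra). lra. }
  assert (Hrho : rho_square k = s4 * sqrt 3 * q / (s4 * q - r2)) by (unfold rho_square; fold s4 q r2; rewrite H27; auto).
  rewrite Hrho. split; [|split].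
  - apply Rdiv_lt_0_compat; [|lra]. repeat apply Rmult_lt_0_compat; lra.
  - replace (s4 * sqrt 3 * q / (s4 * q - r2) * (2 / sqrt 3)) with (2 * (s4 * q) / (s4 * q - r2)) by (field; lra).
    apply Rmult_le_reg_r with (s4 * q - r2); [lra|]. unfold Rdiv. rewrite Rmult_assoc, Rinv_l by lra. lra.
  - intros H16. rewrite Rmult_1_r.
    assert (Hk16 : INR k <= 16) by (replace 16 with (INR 16) by (simpl; lra); apply le_INR; auto).
    assert (Hq4 : q <= 4) by (apply Rnot_lt_le; intros h; assert (4*4 < q*q) by (apply sq_lt; lra); lra).
    assert (Hs4b : s4 <= 4/3) by (apply Rnot_lt_le; intros h; assert (4/3*(4/3) < s4*s4) by (apply sq_lt; lra); assert (16/9*(16/9) < sqrt 3 * sqrt 3) by (apply sq_lt; lra); lra).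
    assert (Hs3b : 17/10 <= sqrt 3) by (apply sq_ge; lra).
    assert (Hr2b : 7/5 <= r2) by (apply sq_ge; lra).
    apply Rmult_le_reg_r with (s4 * q - r2); [lra|]. unfold Rdiv. rewrite Rmult_assoc, Rinv_l by lra.
    assert (s4 * q <= 4/3 * 4) by (apply Rmult_le_compat; lra).
    assert (Hs3u : sqrt 3 <= 2) by (apply Rnot_lt_le; intros h; assert (2*2 < sqrt 3*sqrt 3) by (apply sq_lt; lra); lra).
    assert (0 <= s4 * q) by (apply Rmult_le_pos; lra).
    assert (s4 * q * (2 - sqrt 3) <= 16/3 * (3/10)) by (apply Rmult_le_compat; lra).
    lra.
Qed.

Section Graph.
Context {V : Type} (adj : V -> V -> Prop).

Lemma walk_snoc n u w v : walk adj n u w -> adj w v -> walk adj (S n) u v.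
Proof. induction 1; intros H'. - econstructor; eauto; constructor. - econstructor; eauto. Qed.

Lemma walk_rev n u v : (forall x y, adj x y -> adj y x) -> walk adj n u v -> walk adj n v u.
Proof. intros Hs. induction 1. constructor. eapply walk_snoc; eauto. Qed.

Lemma walk_app n m u v w : walk adj n u v -> walk adj m v w -> walk adj (n + m) u w.
Proof. induction 1; intros H'; simpl; auto. econstructor; eauto. Qed.

Lemma walk_split n u v : walk adj n u v -> forall h, (h <= n)%nat -> exists w, walk adj h u w /\ walk adj (n - h) w v.
Proof.
  induction 1; intros h Hh.
  - exists v. assert (h = 0%nat) by lia. subst. split; constructor.
  - destruct h as [|h].
    + exists u. split; [constructor|]. simpl. econstructor; eauto.
    + destruct (IHwalk h ltac:(lia)) as [x [H1 H2]]. exists x. split; [econstructor; eauto|]. simpl. auto.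
Qed.

Lemma walk0 u v : walk adj 0 u v -> u = v.
Proof. intros H. inversion H. auto. Qed.

Context (d : V -> V -> R).
Hypothesis Hs : forall x y, adj x y -> adj y x.
Hypothesis Hconn : connected_graph adj.
Hypothesis Hsp : shortest_path_metric adj d.

Lemma d_le m u v : walk adj m u v -> d u v <= INR m.
Proof. intros H. destruct (Hsp u v) as [n [_ [Hn ->]]]. apply le_INR. auto. Qed.

Lemma g_nn x y : 0 <= d x y.
Proof. destruct (Hsp x y) as [n [_ [_ ->]]]. apply pos_INR. Qed.

Lemma g_sym x y : d x y = d y x.
Proof.
  destruct (Hsp x y) as [n [Hw1 [_ E1]]]. destruct (Hsp y x) as [m [Hw2 [_ E2]]].
  apply Rle_antisym.
  - rewrite E2. apply d_le. apply walk_rev; auto.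
  - rewrite E1. apply d_le. apply walk_rev; auto.
Qed.

Lemma g_diag x : d x x = 0.
Proof. apply Rle_antisym; [|apply g_nn]. replace 0 with (INR 0) by auto. apply d_le. constructor. Qed.

Lemma g_sep x y : d x y = 0 -> x = y.
Proof.
  destruct (Hsp x y) as [n [Hw [_ ->]]]. intros H. replace 0 with (INR 0) in H by auto.
  apply INR_eq in H. subst. apply walk0; auto.
Qed.

Lemma g_tri x y z : d x z <= d x y + d y z.
Proof.
  destruct (Hsp x y) as [n [Hw1 [_ ->]]]. destruct (Hsp y z) as [m [Hw2 [_ ->]]].
  rewrite <- plus_INR. apply d_le. eapply walk_app; eauto.
Qed.

Lemma g_ge1 x y : x <> y -> 1 <= d x y.
Proof.
  destruct (Hsp x y) as [n [Hw [_ ->]]]. intros H. destruct n. { apply walk0 in Hw. contradiction. }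
  replace 1 with (INR 1) by auto. apply le_INR. lia.
Qed.

Lemma part3_lb k : finite_simple_graph adj -> lt_card_if_finite V k -> (2 <= k)%nat ->
  forall P : list V, NoDup P -> length P = k -> Rbar_le (Finite (2/3)) (gap_ratio d P).
Proof.
  intros [[l Hl] _] Hc Hk P HP Hlen.
  apply (lb_gap d g_nn g_diag g_sep); [auto|lia|].
  intros a b Ha Hb Hab Hm.
  destruct (Hsp a b) as [n [Hw [_ Hn]]].
  assert (Hne : P <> nil) by (intros E; rewrite E in Ha; destruct Ha).
  destruct (Nat.le_gt_cases n 1) as [Hn1|Hn2].
  - destruct (classic (exists v, ~ In v P)) as [[v Hv]|Hall].
    + exists v. apply dist_set_ge; auto. intros s Hs'.
      assert (v <> s) by (intros ->; contradiction).
      pose proof (g_ge1 v s H). rewrite Hn.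
      assert (INR n <= 1) by (replace 1 with (INR 1) by auto; apply le_INR; auto). lra.
    + exfalso. destruct (dedup_ex l) as [l' [H1 [H2 H3]]].
      assert (incl l' P). { intros x _. apply NNPP. intros Hx. apply Hall. eauto. }
      pose proof (NoDup_incl_length H1 H). assert (k < length l')%nat.
      { apply Hc; auto. intros x; apply H2; auto. } lia.
  - assert (exists h, (2 * h <= n /\ n <= 3 * h)%nat) as [h [Hh1 Hh2]].
    { destruct (Nat.Even_or_Odd n) as [[h Hh]|[h Hh]]; exists h; lia. }
    destruct (walk_split n a b Hw h ltac:(lia)) as [v [Hv1 Hv2]].
    apply d_le in Hv1. apply d_le in Hv2. rewrite minus_INR in Hv2 by lia.
    assert (INR n <= 3 * INR h).
    { replace 3 with (INR 3) by (simpl; lra). rewrite <- mult_INR. apply le_INR. auto. }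
    assert (2 * INR h <= INR n).
    { replace 2 with (INR 2) by (simpl; lra). rewrite <- mult_INR. apply le_INR. auto. }
    exists v. apply dist_set_ge; auto. intros s Hs'. rewrite Hn.
    destruct (classic (s = a)) as [->|Hsa].
    + pose proof (g_tri a v b). rewrite g_sym. lra.
    + assert (d a b <= d a s) by auto. pose proof (g_tri a v s). lra.
Qed.
End Graph.

Theorem corollary1 :
  (* (i) continuous (compact, path connected) metric spaces: rho = 2 *)
  (forall (T : Type) (d : T -> T -> R),
     is_metric d -> compact_space d -> path_connected_space d ->
     forall (k : nat) (q : nat -> T),
       (2 <= k)%nat -> lt_card_if_finite T k -> farthest_insertion d k q ->
       Rbar_le (gap_ratio d (prefix_set q k))
               (Rbar_mult (Finite 2) (opt_gap_ratio d k))) /\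
  (* (ii) the unit square with the Euclidean metric: rho = rho(k) *)
  (forall (k : nat) (q : nat -> unit_square),
     (2 <= k)%nat -> farthest_insertion euclid_sq k q ->
     Rbar_le (gap_ratio euclid_sq (prefix_set q k))
             (Rbar_mult (Finite (rho_square k)) (opt_gap_ratio euclid_sq k))) /\
  (* (iii) vertex set of a connected graph with the shortest-path metric: rho = 3 *)
  (forall (V : Type) (adj : V -> V -> Prop) (d : V -> V -> R),
     finite_simple_graph adj -> connected_graph adj -> shortest_path_metric adj d ->
     forall (k : nat) (q : nat -> V),
       (2 <= k)%nat -> lt_card_if_finite V k -> farthest_insertion d k q ->
       Rbar_le (gap_ratio d (prefix_set q k))
               (Rbar_mult (Finite 3) (opt_gap_ratio d k))).
Proof.
  split; [|split].
  - intros T d Hm Hcomp Hpc k q Hk Hc HF.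
    pose proof Hm as [Hnn [Hsep [Hsym Htri]]].
    assert (Hdiag : forall x, d x x = 0) by (intros; apply Hsep; auto).
    apply (combine d k _ 1 2).
    + apply (fi_gap d Hsym Hnn Hdiag (fun x y h => proj1 (Hsep x y) h)); auto.
    + intros P HP Hl. apply part1_lb; auto. lia.
    + lra.
    + lra.
  - intros k q Hk HF. destruct (rho_facts k Hk) as [Hr0 [Hr1 Hr2]].
    assert (Hg := fi_gap euclid_sq E_sym E_nn E_diag E_sep k q Hk (sq_card k) HF).
    destruct (Compare_dec.le_lt_dec k 16) as [h|h].
    + apply (combine euclid_sq k _ 1 (rho_square k)); auto.
      intros P HP Hl. apply sq_lb1; auto. lia.
    + apply (combine euclid_sq k _ (2 / sqrt 3) (rho_square k)); auto.
      intros P HP Hl. apply sq_lb2; auto. lia.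
  - intros V adj d Hfin Hconn Hsp k q Hk Hc HF.
    pose proof Hfin as [_ [Hs _]].
    apply (combine d k _ (2/3) 3).
    + apply (fi_gap d (g_sym adj d Hs Hsp) (g_nn adj d Hsp) (g_diag adj d Hsp) (g_sep adj d Hsp)); auto.
    + intros P HP Hl. apply (part3_lb adj d Hs Hsp k); auto.
    + lra.
    + lra.
Qed.
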